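(* Let $\vartheta$ be a recognisable random substitution on $\mathcal A$. Then the map assigning to $y\in X_\vartheta$ its recognisability data $(x,k,(v_i)_{i\in\mathbb Z})$ is continuous, where $x\in X_\vartheta\subset\mathcal A^{\mathbb Z}$, $k\in\mathbb N_0$ and $(v_i)_{i\in\mathbb Z}\in(\mathcal A^+)^{\mathbb Z}$ carry the product of discrete topologies.
   Context: A random substitution $\vartheta$ on a finite alphabet $\mathcal A$ maps each letter to a non-empty finite set of non-empty words, extended to words by $\vartheta(u_1\cdots u_n)=\{w_1\cdots w_n:w_i\in\vartheta(u_i)\}$; $\vartheta^n$ is the $n$-fold composition. $X_\vartheta$ is the set of $x\in\mathcal A^{\mathbb Z}$ all of whose finite subwords are subwords of some word in some $\vartheta^n(a)$, with the product topology and left shift $S$. $\vartheta$ is recognisable if for every $y\in X_\vartheta$ there exist a unique $x\in X_\vartheta$, a unique sequence $(v_i)_{i\in\mathbb Z}$ with $v_i\in\vartheta(x_i)$, and a unique $0\le k<|v_0|$ such that $S^{-k}y=\cdots v_{-2}v_{-1}.v_0v_1\cdots$ (the bi-infinite concatenation with $v_0$ starting at position $0$); the triple $(x,k,(v_i)_{i\in\mathbb Z})$ is the recognisability data of $y$. *)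

(* Defs.v *)
From HB Require Import structures.
From mathcomp Require Import all_boot all_order all_algebra.
From mathcomp Require Import all_classical all_reals all_analysis.

Set Implicit Arguments.
Unset Strict Implicit.
Unset Printing Implicit Defensive.

Import Order.TTheory GRing.Theory Num.Theory.
Local Open Scope ring_scope.

(** A random substitution on a finite alphabet [A] is given by
    [theta : A -> seq (seq A)], the list enumerating the finite set
    [theta a] of words (duplicates are irrelevant). *)
Definition is_random_subst (A : finType) (theta : A -> seq (seq A)) : Prop :=
  (forall a, theta a != [::]) /\ (forall a w, w \in theta a -> w != [::]).

Fixpoint subst_word (A : finType) (theta : A -> seq (seq A)) (u : seq A)
  (w : seq A) : Prop :=
  match u with
  | [::] => w = [::]
  | a :: u' => exists v w', [/\ v \in theta a, subst_word theta u' w' & w = v ++ w']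
  end.

Fixpoint subst_iter (A : finType) (theta : A -> seq (seq A)) (n : nat)
  (u w : seq A) : Prop :=
  match n with
  | 0 => w = u
  | n'.+1 => exists u', subst_iter theta n' u u' /\ subst_word theta u' w
  end.

Definition legal (A : finType) (theta : A -> seq (seq A)) (w : seq A) : Prop :=
  exists (n : nat) (a : A) (u : seq A), subst_iter theta n [:: a] u /\ infix w u.

Definition subword (A : Type) (x : int -> A) (m : int) (len : nat) : seq A :=
  mkseq (fun j => x (m + j%:Z)) len.

Definition Xsub (A : finType) (theta : A -> seq (seq A)) : set (int -> A) :=
  [set x | forall (m : int) (len : nat), legal theta (subword x m len)].

(** [concat_at v z] : [z = ... v_{-2} v_{-1} . v_0 v_1 ...] with [v_0]
    starting at position 0; [p i] is the starting position of [v_i]. *)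
Definition concat_at (A : Type) (v : int -> seq A) (z : int -> A) : Prop :=
  exists p : int -> int,
    [/\ p 0 = 0,
        forall i, p (i + 1) = p i + (size (v i))%:Z &
        forall i (j : nat), (j < size (v i))%N -> z (p i + j%:Z) = nth (z 0) (v i) j].

(** [(x, k, v)] is recognisability data for [y] (not yet asserting uniqueness):
    [x \in X_theta], [v_i \in theta(x_i)], [0 <= k < |v_0|] and
    [S^{-k} y = ... v_{-1} . v_0 v_1 ...], where [(S^{-k} y)_n = y_{n-k}]. *)
Definition is_recog_data (A : finType) (theta : A -> seq (seq A))
  (y : int -> A) (x : int -> A) (k : nat) (v : int -> seq A) : Prop :=
  [/\ Xsub theta x,
      forall i, v i \in theta (x i),
      (k < size (v 0))%N &
      concat_at v (fun n => y (n - k%:Z))].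

Definition recognisable (A : finType) (theta : A -> seq (seq A)) : Prop :=
  forall y, Xsub theta y ->
    exists x k v, is_recog_data theta y x k v /\
      forall x' k' v', is_recog_data theta y x' k' v' ->
        [/\ x' =1 x, k' = k & v' =1 v].

(* Main.v *)
Require Import Defs.
From HB Require Import structures.
From mathcomp Require Import all_boot all_order all_algebra.
From mathcomp Require Import all_classical all_reals all_analysis.
From mathcomp Require Import zify ring.
Set Implicit Arguments. Unset Strict Implicit. Unset Printing Implicit Defensive.
Import Order.TTheory GRing.Theory Num.Theory.
Local Open Scope classical_set_scope.
Local Open Scope ring_scope.
Lemma cvg_compact_cluster (T : topologicalType) (G : set_system T) (K : set T) (p : T) :
  ProperFilter G -> G K -> compact K -> cluster G `<=` [set p] -> G --> p.
Proof.
move=> PG GK cK clG U; rewrite nbhs_simpl => nU.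
apply: contrapT => nGU.
move: nU; rewrite nbhsE; case=> O [oO Op] OU.
have nGO : ~ G O by move=> GO; apply: nGU; apply: filterS GO.
pose H := within (~` O) G.
have PH : ProperFilter H.
  constructor; last by apply: within_filter; exact: filter_filter.
  rewrite /H /within /= => H0; apply: nGO; apply: filterS H0 => x /= h.
  by apply: contrapT => /h.
have HK : H (K `&` ~` O).
  rewrite /H /within /=; apply: filterS GK => x Kx nOx; by split.
have cKO : compact (K `&` ~` O) by apply: compact_closedI => //; exact: open_closedC.
have [z [[Kz nOz] clz]] := cKO H PH HK.
have : cluster G z.
  move=> P Q GP nQ; apply: clz nQ; rewrite /H /within /=; apply: filterS GP => x Px _ //.
by move/clG => /= zp; apply: nOz; rewrite zp.
Qed.
Lemma nbhs_coord (V : choiceType) (g : {ptws int -> discrete_topology V}) (l : int) :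
  nbhs g [set g' : {ptws int -> discrete_topology V} | g' l = g l].
Proof.
have := @proj_continuous int (fun _ => discrete_topology V) l g.
by move/(_ [set g l]); apply; apply: discrete_set1.
Qed.

Lemma absz_cases (l : int) (N : nat) : (absz l <= N.+1)%N ->
  (absz l <= N)%N \/ l = N.+1%:Z \/ l = - N.+1%:Z.
Proof. move=> h; lia. Qed.

Lemma nbhs_ball (V : choiceType) (g : {ptws int -> discrete_topology V}) (N : nat) :
  nbhs g [set g' : {ptws int -> discrete_topology V} | forall l, (absz l <= N)%N -> g' l = g l].
Proof.
elim: N => [|N IH].
  apply: filterS (nbhs_coord g 0) => g' h l hl.
  have -> : l = 0%R by lia.
  exact: h.
apply: filterS (filterI IH (filterI (nbhs_coord g N.+1%:Z) (nbhs_coord g (- N.+1%:Z)%R))) => g' [h1 [h2 h3]] l /absz_cases [|[]].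
- exact: h1.
- by move=> ->.
- by move=> ->.
Qed.
Section Pos.
Variable (T : Type).
Definition posP (v : int -> seq T) (n : nat) : int := \sum_(j < n) (size (v j%:Z))%:Z.
Definition posN (v : int -> seq T) (n : nat) : int := - \sum_(j < n) (size (v (Negz j)))%:Z.
Definition pos (v : int -> seq T) (i : int) : int :=
  match i with Posz n => posP v n | Negz n => posN v n.+1 end.

Lemma pos0 v : pos v 0 = 0.
Proof. by rewrite /= /posP big_ord0. Qed.

Lemma posS v i : pos v (i + 1) = pos v i + (size (v i))%:Z.
Proof.
case: i => n.
  have -> : (Posz n + 1 = Posz n.+1)%R by rewrite -addn1 PoszD.
  by rewrite /= /posP big_ord_recr.
case: n => [|m].
  have -> : (Negz 0 + 1 = 0)%R by [].
  rewrite pos0 /= /posN big_ord_recr big_ord0 /=; ring.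
have -> : (Negz m.+1 + 1 = Negz m)%R by lia.
rewrite /= /posN [in RHS]big_ord_recr /=; ring.
Qed.

Lemma concat_pos v (p : int -> int) : p 0 = 0 ->
  (forall i, p (i + 1) = p i + (size (v i))%:Z) -> forall i, p i = pos v i.
Proof.
move=> p0 hp.
have back (q : int -> int) i : (forall i, q (i + 1) = q i + (size (v i))%:Z) ->
    q i = q (i + 1) - (size (v i))%:Z by move=> h; rewrite h addrK.
case=> n.
  elim: n => [|n IH]; first by rewrite p0 pos0.
  have -> : (Posz n.+1 = Posz n + 1)%R by rewrite -addn1 PoszD.
  by rewrite hp posS IH.
elim: n => [|n IH].
  rewrite (back p) // (back (pos v)); last exact: posS.
  have -> : (Negz 0 + 1 = 0)%R by [].
  by rewrite p0 pos0.
rewrite (back p) // (back (pos v)); last exact: posS.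
have -> : (Negz n.+1 + 1 = Negz n)%R by lia.
by rewrite IH.
Qed.

Lemma concat_atE v (z : int -> T) : concat_at v z <->
  (forall i (j : nat), (j < size (v i))%N -> z (pos v i + j%:Z) = nth (z 0) (v i) j).
Proof.
split.
  case=> p [p0 hp hz] i j hj.
  by rewrite -(concat_pos p0 hp) hz.
move=> h; exists (pos v); split => //; [exact: pos0 | exact: posS].
Qed.

Lemma pos_eq v v' i : (forall l, (absz l <= absz i)%N -> v' l = v l) -> pos v' i = pos v i.
Proof.
case: i => n /= h.
  rewrite /posP; apply: congr_big => // j _; rewrite h //; have := ltn_ord j; lia.
rewrite /posN; congr (- _); apply: congr_big => // j _; rewrite h //=; have := ltn_ord j; lia.
Qed.
End Pos.
Definition agree (T : Type) (N : nat) (x x' : int -> T) :=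
  forall l, (absz l <= N)%N -> x' l = x l.

Lemma agreeW (T : Type) (N M : nat) (x x' : int -> T) : (M <= N)%N -> agree N x x' -> agree M x x'.
Proof. move=> hMN h l hl; apply: h; lia. Qed.

Lemma key (A : finType) (theta : A -> seq (seq A)) (y x : int -> A) (k : nat) (v : int -> seq A) :
  ~ is_recog_data theta y x k v -> exists N : nat, forall y' x' k' v',
    agree N y y' -> agree N x x' -> k' = k -> agree N v v' -> ~ is_recog_data theta y' x' k' v'.
Proof.
rewrite /is_recog_data => nr.
have [hX|nX] := pselect (Xsub theta x); first last.
  have [m [len nl]] : exists m len, ~ legal theta (subword x m len).
    apply: contrapT => H; apply: nX => m len; apply: contrapT => nl; apply: H; exists m, len; exact: nl.
  exists (absz m + len)%N => y' x' k' v' _ hx _ _ [hX' _ _ _]; apply: nl.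
  have -> : subword x m len = subword x' m len.
    rewrite /subword /mkseq; apply/eq_in_map => j; rewrite mem_iota add0n => hj.
    by rewrite hx //; lia.
  exact: hX'.
have [nV|hV] := pselect (forall i, v i \in theta (x i)); first last.
  have [i ni] : exists i, ~ (v i \in theta (x i)).
    apply: contrapT => H; apply: hV => i; apply: contrapT => ni; apply: H; exists i; exact: ni.
  exists (absz i) => y' x' k' v' _ hx _ hv [_ hV' _ _]; apply: ni.
  by rewrite -hx // -hv //.
have [nK|hK] := pselect (k < size (v 0))%N; first last.
  exists 0%N => y' x' k' v' _ _ -> hv [_ _ hK' _]; apply: hK.
  by rewrite -hv.
have nC : ~ concat_at v (fun n => y (n - k%:Z)).
  by move=> hC; apply: nr; split.
have [i [j [hj nz]]] : exists i j, (j < size (v i))%N /\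
    y (pos v i + j%:Z - k%:Z) <> nth (y (0 - k%:Z)) (v i) j.
  apply: contrapT => H; apply: nC; apply/concat_atE => i j hj.
  apply: contrapT => nz; apply: H; exists i, j; split => //.
exists (absz i + absz (pos v i + j%:Z - k%:Z)%R)%N => y' x' k' v' hy _ -> hv [_ _ _ hC'].
move/concat_atE: hC' => /(_ i j).
have hvi : v' i = v i by apply: hv; lia.
have hpos : pos v' i = pos v i by apply: pos_eq => l hl; apply: hv; lia.
rewrite hvi hpos => /(_ hj) h; apply: nz.
rewrite -hy; last by lia.
by rewrite h; apply: set_nth_default.
Qed.

Lemma nbhs_prodI (U V : topologicalType) (p : U * V) (P : set U) (Q : set V) :
  nbhs p.1 P -> nbhs p.2 Q -> nbhs p (P `*` Q).
Proof. by move=> hP hQ; exists (P, Q). Qed.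

Local Close Scope ring_scope.

Theorem mainTheorem6 (A : finType) (theta : A -> seq (seq A)) :
  is_random_subst theta -> recognisable theta ->
  forall f : {ptws int -> discrete_topology A} ->
             ({ptws int -> discrete_topology A} * discrete_topology nat *
              {ptws int -> discrete_topology (seq A)}),
    (forall y, Xsub theta y -> is_recog_data theta y (f y).1.1 (f y).1.2 (f y).2) ->
    {within (Xsub theta : set {ptws int -> discrete_topology A}), continuous f}.
Proof.
move=> Hsub Hrec f Hf.
apply/subspace_continuousP => y Xy.
set F := within _ (nbhs y).
have PF : ProperFilter F by apply: within_nbhs_proper; apply: inferP; apply: subset_closure.
pose W := flatten [seq theta a | a <- enum A].
pose M := (\max_(w <- W) size w).+1.
have inW x v : v \in theta x -> v \in W.
  move=> hv; apply/flattenP; exists (theta x) => //; apply: map_f; exact: mem_enum.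
pose K : set ({ptws int -> discrete_topology A} * discrete_topology nat *
              {ptws int -> discrete_topology (seq A)}) :=
  ([set: {ptws int -> discrete_topology A}] `*` `I_M) `*`
  [set v : {ptws int -> discrete_topology (seq A)} | forall i : int, [set` W] (v i)].
apply: (@cvg_compact_cluster _ (f @ F) K).
- rewrite /F /within /=; apply: nearW => y' Xy'.
  have [_ hv hk _] := Hf y' Xy'.
  split; [split => //|] => /=.
    apply: leq_trans hk _; rewrite /M; apply: leqW; apply: leq_bigmax_seq => //.
    exact: inW (hv 0).
  by move=> i; apply: inW (hv i).
- apply: compact_setX; first apply: compact_setX.
  + have -> : [set: {ptws int -> discrete_topology A}] =
        [set g : {ptws int -> discrete_topology A} | forall i : int, [set: A] (g i)] by rewrite predeqE => g; split.
    apply: (@tychonoff int (fun _ => discrete_topology A) (fun _ => [set: A])) => i; apply: finite_compact; exact: finite_finset.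
  + apply: finite_compact; exact: finite_II.
  + apply: (@tychonoff int (fun _ => discrete_topology (seq A)) (fun _ => [set` W])) => i; apply: finite_compact; exact: finite_seq.
- move=> c clc.
  have Rc : is_recog_data theta y c.1.1 c.1.2 c.2.
    apply: contrapT => nR; have [N HN] := key nR.
    have := clc (f @` (Xsub theta `&` agree N y))
       (([set x' | agree N c.1.1 x'] `*` [set c.1.2]) `*` [set v' | agree N c.2 v']).
    case.
    + rewrite /F /within /=; apply: filterS (nbhs_ball y N) => y' ay' Xy'.
      by exists y'.
    + apply: nbhs_prodI; last exact: nbhs_ball.
      apply: nbhs_prodI; first exact: nbhs_ball.
      exact: discrete_set1.
    + move=> d [[y' [Xy' ay'] <-] [[ax kx] av]].
      exact: (HN y' _ _ _ ay' ax kx av (Hf y' Xy')).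
  have [x0 [k0 [v0 [_ uniq]]]] := Hrec y Xy.
  have [e1 e2 e3] := uniq _ _ _ Rc.
  have [g1 g2 g3] := uniq _ _ _ (Hf y Xy).
  rewrite /from_subspace /=.
  clear clc Rc; move: c e1 e2 e3 g1 g2 g3 => [[c1 c2] c3] /= e1 e2 e3.
  case: (f y) => [[d1 d2] d3] /= g1 g2 g3.
  congr (_, _, _).
  + by apply: funext => i; rewrite e1 g1.
  + by rewrite e2 g2.
  + by apply: funext => i; rewrite e3 g3.
Qed.
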